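(* Assume that for all $0\le i,j\le d$: $E^*_iAE^*_j=0$ if $|i-j|>1$, and $E^*_iAE^*_j\ne0$ if $|i-j|=1$. Then there exists a unique antiautomorphism $\dagger$ of $\mathcal A$ such that $A^\dagger=A$ and $A^{*\dagger}=A^*$. Moreover $X^{\dagger\dagger}=X$ for all $X\in\mathcal A$.
   Context: Let $\mathbb K$ be a field, $d\ge 0$ an integer, and $\mathcal A$ a $\mathbb K$-algebra isomorphic to $\mathrm{Mat}_{d+1}(\mathbb K)$, with identity $I$. An element of $\mathcal A$ is multiplicity-free if it has $d+1$ mutually distinct eigenvalues, all in $\mathbb K$; for such $A$ with eigenvalues $\theta_0,\ldots,\theta_d$, the primitive idempotent associated with $\theta_i$ is $E_i=\prod_{j\ne i}(A-\theta_jI)/(\theta_i-\theta_j)$. Standing setup: $A,A^*$ are multiplicity-free elements of $\mathcal A$ ($A^*$ is just a name, not an adjoint); $E^*_0,\ldots,E^*_d$ is an ordering of the primitive idempotents of $A^*$. An antiautomorphism of $\mathcal A$ is a $\mathbb K$-linear bijection $\sigma:\mathcal A\to\mathcal A$ with $(XY)^\sigma=Y^\sigma X^\sigma$ for all $X,Y\in\mathcal A$. *)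

(* Defs.v *)
From HB Require Import structures.
From mathcomp Require Import all_boot all_order all_algebra.
Set Implicit Arguments. Unset Strict Implicit. Unset Printing Implicit Defensive.
Import GRing.Theory.
Local Open Scope ring_scope.

(* The algebra A ~ Mat_{d+1}(K) is realised as 'M[K]_(d.+1). *)

Definition eigen_ordering (K : fieldType) (d : nat) (M : 'M[K]_(d.+1))
  (th : 'I_(d.+1) -> K) : Prop :=
  injective th /\ forall i, eigenvalue M (th i).

Definition multiplicity_free (K : fieldType) (d : nat) (M : 'M[K]_(d.+1)) : Prop :=
  exists th : 'I_(d.+1) -> K, eigen_ordering M th.

Definition prim_idem (K : fieldType) (d : nat) (M : 'M[K]_(d.+1))
  (th : 'I_(d.+1) -> K) (i : 'I_(d.+1)) : 'M[K]_(d.+1) :=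
  \prod_(j < d.+1 | j != i) ((th i - th j)^-1 *: (M - (th j)%:M)).

Definition antiautomorphism (K : fieldType) (d : nat)
  (s : 'M[K]_(d.+1) -> 'M[K]_(d.+1)) : Prop :=
  [/\ forall (c : K) (X Y : 'M[K]_(d.+1)), s (c *: X + Y) = c *: s X + s Y,
      bijective s &
      forall X Y : 'M[K]_(d.+1), s (X *m Y) = s Y *m s X].

(* Main.v *)
Require Import Defs.
From HB Require Import structures.
From mathcomp Require Import all_boot all_order all_algebra.
From mathcomp Require Import ring zify.
Import GRing.Theory.
Local Open Scope ring_scope.

Set Implicit Arguments.
Lemma anti0 (K : fieldType) d (s : 'M[K]_(d.+1) -> 'M[K]_(d.+1)) :
  antiautomorphism s -> s 0 = 0.
Proof.
case=> L _ _; have := L 1 0 0; rewrite !scale1r addr0 => h.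
by apply: (addrI (s 0)); rewrite -h addr0.
Qed.

Lemma antiD (K : fieldType) d (s : 'M[K]_(d.+1) -> 'M[K]_(d.+1)) X Y :
  antiautomorphism s -> s (X + Y) = s X + s Y.
Proof. by case=> L _ _; have := L 1 X Y; rewrite !scale1r. Qed.

Lemma antiZ (K : fieldType) d (s : 'M[K]_(d.+1) -> 'M[K]_(d.+1)) c X :
  antiautomorphism s -> s (c *: X) = c *: s X.
Proof.
move=> h; have := h; case=> L _ _; have := L c X 0.
by rewrite addr0 (anti0 h) addr0.
Qed.

Lemma anti1 (K : fieldType) d (s : 'M[K]_(d.+1) -> 'M[K]_(d.+1)) :
  antiautomorphism s -> s 1%:M = 1%:M.
Proof.
case=> _ [g sg gs] M.
have e : s (g 1%:M) = 1%:M by rewrite gs.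
by rewrite -[RHS]e -[g 1%:M]mul1mx M e mul1mx.
Qed.

Lemma eigen_prod (K : fieldType) d (M : 'M[K]_(d.+1)) th i (v : 'rV_(d.+1)) lam :
  v *m M = lam *: v ->
  v *m prim_idem M th i =
  (\prod_(j < d.+1 | j != i) ((th i - th j)^-1 * (lam - th j))) *: v.
Proof.
move=> hv; rewrite /prim_idem.
elim/big_rec2: _ => [|j x Y _ IH]; first by rewrite scale1r; apply: mulmx1.
rewrite -mulmxE mulmxA -scalemxAr mulmxBr hv mul_mx_scalar -scalerBl.
by rewrite -!scalemxAl IH !scalerA.
Qed.

Lemma QE (K : fieldType) d (As Q : 'M[K]_(d.+1)) ths :
  injective ths -> (forall k, row k Q *m As = ths k *: row k Q) ->
  forall i, Q *m prim_idem As ths i = delta_mx i i *m Q.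
Proof.
move=> inj hQ i; apply/row_matrixP => k.
rewrite row_mul (eigen_prod _ _ (hQ k)) row_mul (rowE k (delta_mx i i)) mul_delta_mx_cond.
have [->|nki] := eqVneq k i.
  rewrite mulr1n -rowE big1 ?scale1r // => j ji.
  by rewrite mulVf // subr_eq0; apply: contra ji => /eqP /inj ->.
by rewrite mulr0n mul0mx (bigD1 k) //= subrr mulr0 mul0r scale0r.
Qed.

Lemma exQ (K : fieldType) d (As : 'M[K]_(d.+1)) ths :
  eigen_ordering As ths ->
  exists Q : 'M[K]_(d.+1), Q \in unitmx /\
    forall k, row k Q *m As = ths k *: row k Q.
Proof.
case=> inj ev.
have ex i : exists v : 'rV_(d.+1), (v *m As == ths i *: v) && (v != 0).
  by have /eigenvalueP [v h1 h2] := ev i; exists v; rewrite h1 eqxx h2.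
pose Q : 'M[K]_(d.+1) := \matrix_(i, j) (xchoose (ex i)) 0 j.
have rQ i : row i Q = xchoose (ex i) by apply/rowP => j; rewrite !mxE.
have hQ k : row k Q *m As = ths k *: row k Q.
  by rewrite rQ; case/andP: (xchooseP (ex k)) => /eqP.
have nz k : row k Q != 0 by rewrite rQ; case/andP: (xchooseP (ex k)).
exists Q; split => //.
rewrite -row_free_unit -kermx_eq0; apply/eqP/row_matrixP => k; rewrite row0.
set c := row k (kermx Q).
have cQ : c *m Q = 0 by rewrite /c -row_mul mulmx_ker row0.
clearbody c.
apply/rowP => i; rewrite [RHS]mxE.
have cd : c *m delta_mx i i = c 0 i *: delta_mx 0 i.
  apply/matrixP => a b; rewrite !mxE (bigD1 i) //= big1 ?addr0.
    by rewrite !mxE eqxx /= (ord1 a) eqxx /=.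
  by move=> m /negPf mi; rewrite !mxE mi /= mulr0.
have : c *m Q *m prim_idem As ths i = 0 by rewrite cQ mul0mx.
rewrite -mulmxA (QE inj hQ) mulmxA cd -scalemxAl -rowE => /eqP.
by rewrite scaler_eq0 (negPf (nz i)) orbF => /eqP.
Qed.

Lemma Eexpr (K : fieldType) d (Q E : 'M[K]_(d.+1)) i :
  Q \in unitmx -> Q *m E = delta_mx i i *m Q -> E = invmx Q *m delta_mx i i *m Q.
Proof. by move=> uQ h; rewrite -mulmxA -h mulKmx. Qed.

Lemma eBe (K : fieldType) n (B : 'M[K]_n) i j :
  delta_mx i i *m B *m delta_mx j j = B i j *: delta_mx i j.
Proof.
apply/matrixP => a b; rewrite !mxE (bigD1 j) //= big1 ?addr0.
  rewrite !mxE (bigD1 i) //= big1 ?addr0.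
    rewrite !mxE !eqxx !andbT; case: (a == i); case: (b == j);
    by rewrite /= ?(mulr0, mul0r, mulr1, mul1r).
  by move=> m /negPf mi; rewrite !mxE mi andbF mul0r.
by move=> m /negPf mi; rewrite !mxE mi /= mulr0.
Qed.

Lemma EAE (K : fieldType) d (A Q : 'M[K]_(d.+1)) (E : 'I_(d.+1) -> 'M[K]_(d.+1)) i j :
  Q \in unitmx -> (forall i, E i = invmx Q *m delta_mx i i *m Q) ->
  E i *m A *m E j = (Q *m A *m invmx Q) i j *: (invmx Q *m delta_mx i j *m Q).
Proof.
move=> uQ hE; rewrite !hE.
have e : invmx Q *m (delta_mx i i *m (Q *m A *m invmx Q) *m delta_mx j j) *m Q =
   invmx Q *m delta_mx i i *m Q *m A *m (invmx Q *m delta_mx j j *m Q).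
  by rewrite !mulmxA.
by rewrite -e eBe -scalemxAr -scalemxAl.
Qed.

Definition Tm (K : fieldType) n (dd : 'I_n -> K) (Y : 'M[K]_n) : 'M[K]_n :=
  \matrix_(i, j) (dd i / dd j * Y j i).
Arguments Tm {K n}.

Lemma Tm_lin (K : fieldType) n (dd : 'I_n -> K) c X Y :
  Tm dd (c *: X + Y) = c *: Tm dd X + Tm dd Y.
Proof. by apply/matrixP => i j; rewrite !mxE; ring. Qed.

Lemma Tm_mul (K : fieldType) n (dd : 'I_n -> K) X Y :
  (forall i, dd i != 0) -> Tm dd (X *m Y) = Tm dd Y *m Tm dd X.
Proof.
move=> nz; apply/matrixP => i j; rewrite !mxE mulr_sumr; apply: eq_bigr => k _.
rewrite !mxE; field; rewrite ?nz //.
Qed.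

Lemma Tm_inv (K : fieldType) n (dd : 'I_n -> K) X :
  (forall i, dd i != 0) -> Tm dd (Tm dd X) = X.
Proof. by move=> nz; apply/matrixP => i j; rewrite !mxE; field; rewrite ?nz. Qed.

Lemma Tm_fix (K : fieldType) n (dd : 'I_n -> K) (X : 'M[K]_n) :
  (forall i, dd i != 0) -> (forall i j, dd i * X j i = X i j * dd j) -> Tm dd X = X.
Proof.
move=> nz h; apply/matrixP => i j; rewrite !mxE mulrAC h.
by rewrite -mulrA mulfV ?mulr1 ?nz.
Qed.

Lemma Gmul (K : fieldType) n (Q : 'M[K]_n.+1) i k j : Q \in unitmx ->
  (invmx Q *m delta_mx i k *m Q) *m (invmx Q *m delta_mx k j *m Q)
  = invmx Q *m delta_mx i j *m Q.
Proof.
move=> uQ; rewrite !mulmxA mulmxK // -(mulmxA _ (delta_mx i k)) mul_delta_mx.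
by [].

Qed.

Lemma uniq_gen (K : fieldType) d (A As Q : 'M[K]_(d.+1)) ths
  (t s : 'M[K]_(d.+1) -> 'M[K]_(d.+1)) :
  Q \in unitmx -> (forall i, prim_idem As ths i = invmx Q *m delta_mx i i *m Q) ->
  (forall i j : 'I_(d.+1), (i.+1 == j) || (j.+1 == i) -> (Q *m A *m invmx Q) i j != 0) ->
  antiautomorphism t -> antiautomorphism s -> t A = s A -> t As = s As ->
  forall X, t X = s X.
Proof.
move=> uQ hE hB aT aS tA tAs.
pose P X := t X = s X.
have P0 : P 0 by rewrite /P !anti0.
have PD X Y : P X -> P Y -> P (X + Y) by rewrite /P !antiD // => -> ->.
have PZ c X : P X -> P (c *: X) by rewrite /P !antiZ // => ->.
have PM X Y : P X -> P Y -> P (X *m Y).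
  move=> hX hY; rewrite /P; case: aT => _ _ ->; case: aS => _ _ ->.
  by rewrite hX hY.
have P1 : P 1%:M by rewrite /P !anti1.
have PE i : P (prim_idem As ths i).
  rewrite /prim_idem; apply: (big_ind P); first exact: P1.
    by move=> x y; apply: (PM).
  move=> j _; apply: (PZ); apply: (PD) => //.
  by rewrite -scaleN1r; apply: (PZ); rewrite -scalemx1; apply: (PZ).
pose G (i j : 'I_(d.+1)) := invmx Q *m delta_mx i j *m Q.
have PGadj (i j : 'I_(d.+1)) : (i.+1 == j) || (j.+1 == i) -> P (G i j).
  move=> adj; have h := @EAE _ _ A Q (prim_idem As ths) i j uQ hE.
  have : P (prim_idem As ths i *m A *m prim_idem As ths j) by apply: (PM); [apply: (PM)|].
  rewrite h => /(PZ ((Q *m A *m invmx Q) i j)^-1).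
  by rewrite scalerA mulVf ?scale1r // hB.
have PGd (i : 'I_(d.+1)) : P (G i i) by rewrite /G -hE.
have PG : forall (n : nat) (i j : 'I_(d.+1)), ((j : nat) = (i + n)%N \/ (i : nat) = (j + n)%N) -> P (G i j).
  move=> n; elim: n => [|n IH] i j.
    by rewrite !addn0; case=> /ord_inj ->; apply: (PGd).
  case=> e.
    have lt : (i.+1 < d.+1)%N by have := ltn_ord j; lia.
    rewrite /G -(@Gmul _ _ Q i (Ordinal lt) j uQ); apply: (PM).
      by apply: (PGadj); rewrite /= eqxx.
    by apply: IH; left => /=; lia.
  have lt : (j.+1 < d.+1)%N by have := ltn_ord i; lia.
  rewrite /G -(@Gmul _ _ Q i (Ordinal lt) j uQ); apply: (PM).
    by apply: IH; right => /=; lia.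
  by apply: (PGadj); rewrite /= eqxx orbT.
have PGall (i j : 'I_(d.+1)) : P (G i j).
  case: (leqP i j) => h; [apply: (PG (j - i)%N); left | apply: (PG (i - j)%N); right]; lia.
move=> X; set Y := Q *m X *m invmx Q.
have eX : X = invmx Q *m Y *m Q.
  by rewrite /Y !mulmxA mulVmx // mul1mx mulmxKV.
rewrite eX (matrix_sum_delta Y) mulmx_sumr mulmx_suml.
apply: (big_ind P) => // a _; rewrite mulmx_sumr mulmx_suml.
apply: (big_ind P) => // b _; rewrite -scalemxAr -scalemxAl.
by apply: (PZ); apply: (PGall).
Qed.

Fixpoint dseq (K : fieldType) (f : nat -> nat -> K) (n : nat) : K :=
  match n with 0 => 1 | m.+1 => @dseq K f m * f m.+1 m / f m m.+1 end.
Arguments dseq {K}.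

Lemma dseq_nz (K : fieldType) (f : nat -> nat -> K) d :
  (forall m, (m < d)%N -> f m m.+1 != 0 /\ f m.+1 m != 0) ->
  forall m, (m <= d)%N -> dseq f m != 0.
Proof.
move=> h; elim=> [|m IH] lt /=; first exact: oner_neq0.
have [h1 h2] := h m lt.
by rewrite !mulf_neq0 ?invr_eq0 // IH // ltnW.
Qed.

Lemma dseq_step (K : fieldType) (f : nat -> nat -> K) m :
  f m m.+1 != 0 -> dseq f m * f m.+1 m = f m m.+1 * dseq f m.+1.
Proof. by move=> nz /=; field. Qed.

Lemma Bsym (K : fieldType) d (B : 'M[K]_(d.+1)) :
  (forall i j : 'I_(d.+1), ((i.+1 < j)%N || (j.+1 < i)%N) -> B i j = 0) ->
  (forall i j : 'I_(d.+1), ((i.+1 == j) || (j.+1 == i)) -> B i j != 0) ->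
  exists dd : 'I_(d.+1) -> K, (forall i, dd i != 0) /\
    forall i j, dd i * B j i = B i j * dd j.
Proof.
move=> hfar hadj.
pose f m n := B (inord m) (inord n).
have fB (i j : 'I_(d.+1)) : B i j = f i j by rewrite /f !inord_val.
have fnz m : (m < d)%N -> f m m.+1 != 0 /\ f m.+1 m != 0.
  move=> lt; split; apply: hadj; rewrite !inordK ?eqxx ?orbT //; lia.
exists (fun i => dseq f i); split.
  by move=> i; apply: (@dseq_nz _ f d fnz); have := ltn_ord i; lia.
move=> i j; rewrite !fB.
have [e|ne] := eqVneq (i : nat) j.
  by rewrite e mulrC.
have [e|ne2] := eqVneq (j : nat) i.+1.
  have lt' : (i < d)%N by have := ltn_ord j; lia.
  by rewrite e dseq_step //; case: (fnz i lt').
have [e|ne3] := eqVneq (i : nat) j.+1.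
  have lt' : (j < d)%N by have := ltn_ord i; lia.
  case: (fnz j lt') => h1 _; by rewrite e mulrC -dseq_step // mulrC.
have far : ((i.+1 < j)%N || (j.+1 < i)%N) by move: ne ne2 ne3; move/eqP; move/eqP; move/eqP; lia.
have far' : ((j.+1 < i)%N || (i.+1 < j)%N) by rewrite orbC.
by rewrite -!fB hfar // hfar // mulr0 mul0r.
Qed.

Theorem lemma5p4 (K : fieldType) (d : nat) (A As : 'M[K]_(d.+1))
  (ths : 'I_(d.+1) -> K) :
  multiplicity_free A ->
  eigen_ordering As ths ->
  (forall i j : 'I_(d.+1), ((i.+1 < j)%N || (j.+1 < i)%N) ->
     prim_idem As ths i *m A *m prim_idem As ths j = 0) ->
  (forall i j : 'I_(d.+1), ((i.+1 == j) || (j.+1 == i)) ->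
     prim_idem As ths i *m A *m prim_idem As ths j != 0) ->
  exists s : 'M[K]_(d.+1) -> 'M[K]_(d.+1),
    [/\ antiautomorphism s, s A = A, s As = As,
        (forall t : 'M[K]_(d.+1) -> 'M[K]_(d.+1),
           antiautomorphism t -> t A = A -> t As = As -> forall X, t X = s X) &
        forall X, s (s X) = X].
Proof.
move=> _ eo H1 H2.
have inj := eo.1.
have [Q [uQ hQ]] := exQ eo.
have hE i : prim_idem As ths i = invmx Q *m delta_mx i i *m Q.
  exact: Eexpr uQ (QE inj hQ i).
set B := Q *m A *m invmx Q.
have hEAE i j := @EAE _ _ A Q (prim_idem As ths) i j uQ hE.
have hadj : forall i j : 'I_(d.+1), ((i.+1 == j) || (j.+1 == i)) -> B i j != 0.
  move=> i j adj; have := H2 i j adj; rewrite hEAE; apply: contra => /eqP ->.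
  by rewrite scale0r.
have hfar : forall i j : 'I_(d.+1), ((i.+1 < j)%N || (j.+1 < i)%N) -> B i j = 0.
  move=> i j far; have := H1 i j far; rewrite hEAE => /eqP.
  rewrite scaler_eq0 => /orP [/eqP //|/eqP h].
  have := congr1 (fun M => (Q *m M *m invmx Q) i j) h.
  rewrite mulmx0 mul0mx !mulmxA mulmxV // mul1mx mulmxK // !mxE !eqxx /=.
  by move/eqP; rewrite oner_eq0.
have [dd [ddnz hdd]] := @Bsym _ _ B hfar hadj.
pose sg X := invmx Q *m Tm dd (Q *m X *m invmx Q) *m Q.
have conjK M : Q *m (invmx Q *m M *m Q) *m invmx Q = M.
  by rewrite !mulmxA mulmxV // mul1mx mulmxK.
have conjK' X : invmx Q *m (Q *m X *m invmx Q) *m Q = X.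
  by rewrite !mulmxA mulVmx // mul1mx mulmxKV.
have sgK X : sg (sg X) = X by rewrite /sg conjK Tm_inv.
have sgA : sg A = A by rewrite /sg -/B Tm_fix // /B conjK'.
have dAs : Q *m As = diag_mx (\row_i ths i) *m Q.
  apply/row_matrixP => k; rewrite row_mul hQ mul_diag_mx.
  by apply/rowP => l; rewrite !mxE.
have sgAs : sg As = As.
  rewrite /sg dAs mulmxK // Tm_fix //; first by rewrite -mulmxA -dAs mulKmx.
  move=> i j; rewrite !mxE; have [->|ne] := eqVneq i j; first by rewrite mulrC.
  by rewrite !mulr0n mulr0 mul0r.
have sgant : antiautomorphism sg.
  split.
  - move=> c X Y; rewrite /sg mulmxDr mulmxDl -!scalemxAr -!scalemxAl Tm_lin.
    by rewrite mulmxDr mulmxDl -!scalemxAr -!scalemxAl.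
  - by exists sg.
  - move=> X Y; rewrite /sg.
    have -> : Q *m (X *m Y) *m invmx Q = (Q *m X *m invmx Q) *m (Q *m Y *m invmx Q).
      by rewrite !mulmxA mulmxKV.
    by rewrite Tm_mul // !mulmxA mulmxK.
exists sg; split => //.
move=> t tant tA tAs.
apply: (@uniq_gen _ _ A As Q ths t sg uQ hE hadj tant sgant); by rewrite ?sgA ?sgAs.
Qed.
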